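(* Let $G$ be a graph and $w$ a vertex of $G$ adjacent to two leaves $v_1$ and $v_2$. Then $$\phi(G)\le \sum_{u\in N(w)\setminus\{v_1\}}\phi\big(G-(N[w]\cup N[u])\big)+\phi(G-\{w,v_1,v_2\})+\phi(G-N[w]).$$
   Context: Graphs are finite and simple; a leaf is a vertex of degree $1$. $N(v)$ is the neighborhood of $v$, $N[v]=N(v)\cup\{v\}$, and $G-S$ is the subgraph induced by $V(G)\setminus S$. A subset $F$ of vertices is a dissociation set if $G[F]$ has maximum degree at most $1$; a maximal dissociation set is one not properly contained in another dissociation set; $\phi(G)$ is the number of maximal dissociation sets of $G$, with $\phi=1$ for the graph with no vertices. *)

(* Defs.v *)
From mathcomp Require Import all_boot all_order.
Set Implicit Arguments. Unset Strict Implicit. Unset Printing Implicit Defensive.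

Definition simple_graph (T : finType) (e : rel T) : Prop :=
  symmetric e /\ irreflexive e.

Section Graph.
Variables (T : finType) (e : rel T).

Definition nbhd (v : T) : {set T} := [set u | e v u].
Definition cnbhd (v : T) : {set T} := v |: nbhd v.

Definition is_leaf (v : T) : bool := #|nbhd v| == 1.

(* F is a dissociation set of the induced subgraph G[S]:
   F ⊆ S and G[F] has maximum degree at most 1. *)
Definition dissoc (S F : {set T}) : bool :=
  (F \subset S) && [forall x in F, #|F :&: nbhd x| <= 1].

Definition maxdissoc (S F : {set T}) : bool :=
  dissoc S F && [forall F' : {set T}, (F \proper F') ==> ~~ dissoc S F'].

(* phi of the induced subgraph G[S]; phi of the empty graph is 1 *)
Definition phi (S : {set T}) : nat := #|[set F : {set T} | maxdissoc S F]|.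

Definition phi_del (X : {set T}) : nat := phi (~: X).

End Graph.

(* Main.v *)
Require Import Defs.
From mathcomp Require Import all_boot all_order.
Set Implicit Arguments. Unset Strict Implicit. Unset Printing Implicit Defensive.

Lemma card_bigcup_le (T : finType) (I : finType) (A : {set I}) (G : I -> {set T}) :
  #|\bigcup_(i in A) G i| <= \sum_(i in A) #|G i|.
Proof.
apply: (big_ind2 (fun (X : {set T}) n => #|X| <= n)).
- by rewrite cards0.
- move=> x1 x2 y1 y2 h1 h2.
  exact: leq_trans (leq_card_setU _ _).1 (leq_add h1 h2).
- by [].
Qed.

Lemma dissoc_add (T : finType) (e : rel T) : symmetric e -> irreflexive e ->
  forall F x, dissoc e setT F -> x \notin F -> #|F :&: nbhd e x| <= 1 ->
  (forall y, y \in F :&: nbhd e x -> F :&: nbhd e y = set0) ->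
  dissoc e setT (x |: F).
Proof.
move=> sym irr F x /andP[_ /forallP dF] xF c1 iso.
apply/andP; split; first exact: subsetT.
apply/forallP => z; apply/implyP; rewrite in_setU1 => /orP[/eqP->|zF].
- rewrite setIUl.
  have ->: [set x] :&: nbhd e x = set0.
    apply/setP=> y; rewrite !inE; case: eqP => [->|] //=; by rewrite irr.
  by rewrite set0U.
- case exz: (e z x).
  + have : z \in F :&: nbhd e x by rewrite inE zF inE sym.
    move/iso => H. rewrite setIUl H setU0.
    by apply: leq_trans (subset_leq_card (subsetIl _ _)) _; rewrite cards1.
  + rewrite setIUl.
    have ->: [set x] :&: nbhd e z = set0.
      by apply/setP=> y; rewrite !inE; case: eqP => [->|] //=; rewrite exz.
    rewrite set0U. exact: (implyP (dF z) zF).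
Qed.

Lemma max_add_false (T : finType) (e : rel T) : symmetric e -> irreflexive e ->
  forall F x, maxdissoc e setT F -> x \notin F -> #|F :&: nbhd e x| <= 1 ->
  (forall y, y \in F :&: nbhd e x -> F :&: nbhd e y = set0) -> False.
Proof.
move=> sym irr F x /andP[dF /forallP mF] xF c1 iso.
have := dissoc_add sym irr dF xF c1 iso.
have := implyP (mF (x |: F)).
rewrite properUr; last by rewrite sub1set.
by move=> /(_ isT) /negP.
Qed.

Lemma leaf_nbhd (T : finType) (e : rel T) v w :
  is_leaf e v -> e v w -> nbhd e v = [set w].
Proof.
move/cards1P=> [x Hx] evw.
have: w \in nbhd e v by rewrite inE.
by rewrite Hx inE => /eqP ->.
Qed.

Lemma max_restrict (T : finType) (e : rel T) : symmetric e ->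
  forall F S X : {set T}, maxdissoc e setT F -> S \subset F -> S \subset X ->
  (forall s, s \in S -> nbhd e s \subset X) -> F :\: S \subset ~: X ->
  maxdissoc e (~: X) (F :\: S).
Proof.
move=> sym F S X /andP[/andP[_ /forallP dF] /forallP mF] SF SX NX FSX.
apply/andP; split.
  apply/andP; split=> //. apply/forallP=> x; apply/implyP=> xFS.
  have xF: x \in F by move: xFS; rewrite inE => /andP[].
  apply: leq_trans (implyP (dF x) xF).
  apply: subset_leq_card. apply: setSI. exact: subsetDl.
apply/forallP=> H'; apply/implyP=> pH'; apply/negP => /andP[H'X /forallP dH'].
have := implyP (mF (H' :|: S)).
move: pH' => /properP [sub [x xH' xFS]].
have xX : x \in ~: X by exact: (subsetP H'X).
have xS : x \notin S.
  apply/negP => /(subsetP SX); move: xX; rewrite inE => /negP; done.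
have xF : x \notin F by move: xFS; rewrite inE xS.
have prop : F \proper H' :|: S.
  apply/properP; split.
    apply/subsetP=> y yF; rewrite inE.
    case yS: (y \in S); first by rewrite orbT.
    by rewrite (subsetP sub) // inE yS yF.
  by exists x => //; rewrite inE xH'.
move=> /(_ prop) /negP; apply.
apply/andP; split; first exact: subsetT.
apply/forallP=> y; apply/implyP; rewrite inE => /orP[yH'|yS].
- apply: leq_trans (implyP (dH' y) yH').
  apply: subset_leq_card; apply/subsetP=> z; rewrite !inE => /andP[/orP[zH'|zS] eyz].
    by rewrite zH' eyz.
  exfalso.
  have : y \in X by apply: (subsetP (NX z zS)); rewrite inE -sym.
  by have := subsetP H'X y yH'; rewrite inE => /negP.
- apply: leq_trans (implyP (dF y) (subsetP SF y yS)).
  apply: subset_leq_card; apply/subsetP=> z; rewrite !inE => /andP[/orP[zH'|zS] eyz].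
    exfalso.
    have : z \in X by apply: (subsetP (NX y yS)); rewrite inE.
    by have := subsetP H'X z zH'; rewrite inE => /negP.
  by rewrite (subsetP SF z zS) eyz.
Qed.

Lemma card_class (T : finType) (e : rel T) : symmetric e ->
  forall (P : pred {set T}) (S X : {set T}), S \subset X ->
  (forall s, s \in S -> nbhd e s \subset X) ->
  (forall F, maxdissoc e setT F -> P F -> S \subset F /\ F :\: S \subset ~: X) ->
  #|[set F | maxdissoc e setT F && P F]| <= phi_del e X.
Proof.
move=> sym P S X SX NX HP. rewrite /phi_del /phi.
rewrite -(card_in_imset (f := fun F => F :\: S)).
  apply: subset_leq_card. apply/subsetP=> G /imsetP[F]; rewrite inE => /andP[mF PF] ->.
  rewrite inE. have [SF FX] := HP F mF PF. exact: max_restrict.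
move=> F G; rewrite !inE => /andP[mF PF] /andP[mG PG] eqFG.
have [SF _] := HP _ mF PF; have [SG _] := HP _ mG PG.
apply/setP=> z; move/setP: eqFG => /(_ z); rewrite !inE.
case zS: (z \in S); last by [].
by rewrite (subsetP SF z zS) (subsetP SG z zS).
Qed.

Lemma two_nb (T : finType) (e : rel T) F x a b :
  dissoc e setT F -> x \in F -> a \in F -> b \in F -> e x a -> e x b -> a = b.
Proof.
move=> /andP[_ /forallP dF] xF aF bF exa exb.
apply/eqP; apply/negPn/negP => nab.
have := implyP (dF x) xF.
have : [set a; b] \subset F :&: nbhd e x.
  by apply/subsetP=> z; rewrite !inE => /orP[]/eqP->; rewrite ?aF ?bF ?exa ?exb.
move/subset_leq_card; rewrite cards2 nab => h1 h2.
by have := leq_trans h1 h2.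
Qed.

Theorem lemma2p4 (T : finType) (e : rel T) (w v1 v2 : T) :
  simple_graph e ->
  v1 != v2 -> e w v1 -> e w v2 -> is_leaf e v1 -> is_leaf e v2 ->
  phi e [set: T] <=
    \sum_(u in nbhd e w :\ v1) phi_del e (cnbhd e w :|: cnbhd e u)
    + phi_del e [set w; v1; v2]
    + phi_del e (cnbhd e w).
Proof.
move=> [sym irr] nv12 ew1 ew2 l1 l2.
have N1 : nbhd e v1 = [set w] by apply: leaf_nbhd => //; rewrite sym.
have N2 : nbhd e v2 = [set w] by apply: leaf_nbhd => //; rewrite sym.
set M0 := [set F | maxdissoc e setT F && (w \notin F)].
set M1 := [set F | maxdissoc e setT F && ((w \in F) && (v1 \in F))].
set Mu := fun u => [set F | maxdissoc e setT F && ((w \in F) && (u \in F))].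
have cover : [set F | maxdissoc e setT F] \subset
    (\bigcup_(u in nbhd e w :\ v1) Mu u) :|: M0 :|: M1.
  apply/subsetP=> F; rewrite inE => mF.
  case wF: (w \in F); last by rewrite /M0 !inE mF wF /= orbT.
  case v1F: (v1 \in F); first by rewrite /M1 !inE mF wF v1F /= orbT.
  case: (boolP (F :&: nbhd e w == set0)) => [/eqP H0|].
    exfalso; apply: (max_add_false sym irr mF (x := v1)).
    - by rewrite v1F.
    - by rewrite N1; apply: leq_trans (subset_leq_card (subsetIr _ _)) _; rewrite cards1.
    - by move=> y; rewrite N1 !inE => /andP[_ /eqP->].
  case/set0Pn => u; rewrite !inE => /andP[uF ewu].
  apply/orP; left; apply/orP; left; apply/bigcupP; exists u.
    rewrite !inE ewu andbT; apply/negP => /eqP eu; by rewrite -eu uF in v1F.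
  by rewrite /Mu !inE mF wF uF.
rewrite /phi.
apply: leq_trans (subset_leq_card cover) _.
apply: leq_trans (leq_card_setU _ _).1 _.
apply: leq_add; last first.
  apply: (card_class sym (S := [set w; v1])).
  - by apply/subsetP=> z; rewrite !inE => /orP[]/eqP->; rewrite ?eqxx ?ew1 ?orbT.
  - move=> s; rewrite !inE => /orP[]/eqP->; first exact: subsetUr.
    by rewrite N1 sub1set !inE eqxx.
  - move=> F mF /andP[wF v1F]; split.
      by apply/subsetP=> z; rewrite !inE => /orP[]/eqP->.
    apply/subsetP=> y; rewrite !inE negb_or => /andP[/andP[nyw nyv1] yF].
    apply/negP => /orP[/eqP ey|ewy]; first by rewrite ey eqxx in nyw.
    have := two_nb (andP mF).1 wF yF v1F ewy ew1.
    by move=> ey; rewrite ey eqxx in nyv1.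
apply: leq_trans (leq_card_setU _ _).1 _.
apply: leq_add; last first.
  apply: (card_class sym (S := [set v1; v2])).
  - by apply/subsetP=> z; rewrite !inE => /orP[]/eqP->; rewrite ?eqxx ?orbT.
  - move=> s; rewrite !inE => /orP[]/eqP->; by rewrite ?N1 ?N2 sub1set !inE eqxx.
  - move=> F mF wF; split.
      have leafin : forall v, nbhd e v = [set w] -> v \in F.
        move=> v Nv; apply/negPn/negP => vF.
        apply: (max_add_false sym irr mF (x := v) vF).
          by rewrite Nv; apply: leq_trans (subset_leq_card (subsetIr _ _)) _; rewrite cards1.
        by move=> y; rewrite Nv !inE => /andP[yF /eqP ey]; rewrite -ey yF in wF.
      by apply/subsetP=> z; rewrite !inE => /orP[]/eqP->; apply: leafin.
    apply/subsetP=> y; rewrite !inE negb_or => /andP[/andP[nyv1 nyv2] yF].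
    rewrite (negbTE nyv1) (negbTE nyv2) !orbF; apply/negP => /eqP ey; by rewrite -ey yF in wF.
apply: leq_trans (card_bigcup_le _ _) _.
apply: leq_sum => u; rewrite !inE => /andP[nuv1 ewu].
apply: (card_class sym (S := [set w; u])).
- by apply/subsetP=> z; rewrite !inE => /orP[]/eqP->; rewrite ?eqxx ?orbT.
- move=> s; rewrite !inE => /orP[]/eqP->.
    by apply: subset_trans (subsetUl _ _); exact: subsetUr.
  by apply: subset_trans (subsetUr _ _); exact: subsetUr.
- move=> F mF /andP[wF uF]; split.
    by apply/subsetP=> z; rewrite !inE => /orP[]/eqP->.
  apply/subsetP=> y; rewrite !inE negb_or => /andP[/andP[nyw nyu] yF].
  apply/negP => /orP[/orP[/eqP ey|ewy]|/orP[/eqP ey|euy]].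
  + by rewrite ey eqxx in nyw.
  + have := two_nb (andP mF).1 wF yF uF ewy ewu.
    by move=> ey; rewrite ey eqxx in nyu.
  + by rewrite ey eqxx in nyu.
  + have euw : e u w by rewrite sym.
    have := two_nb (andP mF).1 uF yF wF euy euw.
    by move=> ey; rewrite ey eqxx in nyw.
Qed.
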